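(* Let $\mathcal M$ be an o-minimal structure in a language $\mathcal L$ with universe $M$, and $\mathcal N$ an expansion of $\mathcal M$ such that every open definable set is $\mathcal L$-definable and $\mathcal N$ admits a dimension function $\dim$ compatible with $\mathcal M$. Then a finite union of full definable subsets of $M^n$ is full.
   Context: ''Definable'' means definable in $\mathcal N$ with parameters; ''$\mathcal L$-definable'' means definable in $\mathcal M$ with parameters. A dimension function compatible with $\mathcal M$ is a map $\dim$ from definable sets to $\{-\infty\}\cup\mathbb N$ such that for all definable $X,Y\subseteq M^n$, $a\in M$: (D1) $\dim\{a\}=0$, $\dim M=1$, $\dim X=-\infty$ iff $X=\emptyset$; (D2) $\dim(X\cup Y)=\max\{\dim X,\dim Y\}$; (D3) for a definable family $\{X_t\}_{t\in I}$ of pairwise disjoint sets: (a) each $\{t\in I:\dim X_t=d\}$ is definable; (b) if all $X_t$ have dimension $k$ then $\dim\bigcup_t X_t=\dim I+k$; (D4) definable bijections preserve $\dim$; (D5) on $\mathcal L$-definable sets $\dim$ is the o-minimal dimension; (D6) every definable $f:M^n\to M$ agrees with an $\mathcal L$-definable $F:M^n\to M$ outside a definable set of dimension $<n$. $cl$ denotes topological closure. A definable set $X$ is full if $\dim(cl(X)\setminus X)<\dim X$. *)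

(* Defs.v *)
From mathcomp Require Import all_boot.
Set Implicit Arguments. Unset Strict Implicit. Unset Printing Implicit Defensive.

Definition pt (M : Type) (n : nat) := 'I_n -> M.
Definition pset (M : Type) (n : nat) := pt M n -> Prop.

Definition ext_last M n (x : pt M n) (y : M) : pt M n.+1 :=
  fun i => if unlift ord_max i is Some j then x j else y.

Definition join M m n (t : pt M m) (x : pt M n) : pt M (m + n) :=
  fun i => match split i with inl j => t j | inr j => x j end.
Definition lft M m n (z : pt M (m + n)) : pt M m := fun i => z (lshift n i).
Definition rgt M m n (z : pt M (m + n)) : pt M n := fun j => z (rshift m j).

Definition dlo M (lt : M -> M -> Prop) : Prop :=
  [/\ (forall x, ~ lt x x),
      (forall x y z, lt x y -> lt y z -> lt x z),
      (forall x y, lt x y \/ x = y \/ lt y x),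
      (forall x y, lt x y -> exists z, lt x z /\ lt z y)
    & (forall x, (exists y, lt y x) /\ (exists y, lt x y))].

(* A structure on (M,<) given by its collections S n of definable (with
   parameters) subsets of M^n: a Boolean algebra in each arity, closed under
   preimages by coordinate maps (products, permutations, diagonal embeddings),
   under projection along the last coordinate, containing equality, the order
   and all singletons (parameters). *)
Record structure M (lt : M -> M -> Prop) (S : forall n, pset M n -> Prop) : Prop := {
  st_order : dlo lt;
  st_full : forall n, S n (fun _ => True);
  st_compl : forall n A, S n A -> S n (fun x => ~ A x);
  st_union : forall n A B, S n A -> S n B -> S n (fun x => A x \/ B x);
  st_preim : forall m n (f : 'I_m -> 'I_n) A, S m A -> S n (fun x => A (fun i => x (f i)));
  st_proj : forall n (A : pset M n.+1), S n.+1 A -> S n (fun x => exists y, A (ext_last x y));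
  st_eq : S 2 (fun x => x ord0 = x ord_max);
  st_lt : S 2 (fun x => lt (x ord0) (x ord_max));
  st_singleton : forall a : M, S 1 (fun x => x ord0 = a)
}.

(* Open interval with endpoints in M u {-oo,+oo} (None = infinite endpoint). *)
Definition in_interval M (lt : M -> M -> Prop) (lo hi : option M) (x : M) : Prop :=
  (if lo is Some a then lt a x else True) /\ (if hi is Some b then lt x b else True).

Definition o_minimal M (lt : M -> M -> Prop) (S : forall n, pset M n -> Prop) : Prop :=
  structure lt S /\
  forall A : pset M 1, S 1 A ->
    exists (p q : nat) (pts : 'I_p -> M) (ivs : 'I_q -> option M * option M),
      forall x : pt M 1, A x <->
        (exists i, x ord0 = pts i) \/ (exists j, in_interval lt (ivs j).1 (ivs j).2 (x ord0)).

Definition expansion M (lt : M -> M -> Prop) (SM SN : forall n, pset M n -> Prop) : Prop :=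
  structure lt SN /\ forall n A, SM n A -> SN n A.

Definition box M (lt : M -> M -> Prop) n (a b : pt M n) : pset M n :=
  fun x => forall i, lt (a i) (x i) /\ lt (x i) (b i).
Definition is_open M (lt : M -> M -> Prop) n (U : pset M n) : Prop :=
  forall x, U x -> exists a b, box lt a b x /\ forall y, box lt a b y -> U y.
Definition cl M (lt : M -> M -> Prop) n (X : pset M n) : pset M n :=
  fun x => forall a b, box lt a b x -> exists y, box lt a b y /\ X y.
Definition has_interior M (lt : M -> M -> Prop) n (U : pset M n) : Prop :=
  exists x, U x /\ exists a b, box lt a b x /\ forall y, box lt a b y -> U y.

Definition open_definable_L M (lt : M -> M -> Prop) (SM SN : forall n, pset M n -> Prop) : Prop :=
  forall n U, SN n U -> is_open lt U -> SM n U.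

(* Values of dimension: None = -oo, Some k = k. *)
Definition dmax (d e : option nat) : option nat :=
  match d, e with
  | None, _ => e | _, None => d | Some a, Some b => Some (maxn a b) end.
Definition dlt (d e : option nat) : Prop :=
  match d, e with
  | _, None => False | None, Some _ => True | Some a, Some b => a < b end.
Definition dadd (d e : option nat) : option nat :=
  match d, e with Some a, Some b => Some (a + b) | _, _ => None end.

Definition coord_proj M n k (f : 'I_k -> 'I_n) (X : pset M n) : pset M k :=
  fun y => exists x, X x /\ forall i, x (f i) = y i.
Definition is_omin_dim M (lt : M -> M -> Prop) n (X : pset M n) (d : option nat) : Prop :=
  match d with
  | None => forall x, ~ X x
  | Some k =>
      (exists f : 'I_k -> 'I_n, injective f /\ has_interior lt (coord_proj f X)) /\
      (forall k' (f : 'I_k' -> 'I_n), injective f -> has_interior lt (coord_proj f X) -> k' <= k)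
  end.

Definition graph_on M n m (X : pset M n) (f : pt M n -> pt M m) : pset M (n + m) :=
  fun z => X (lft z) /\ forall j, rgt z j = f (lft z) j.
Definition graph1 M n (f : pt M n -> M) : pset M (n + 1) :=
  fun z => rgt z ord0 = f (lft z).

Record dim_compatible M (lt : M -> M -> Prop) (SM SN : forall n, pset M n -> Prop)
    (dim : forall n, pset M n -> option nat) : Prop := {
  D1_point : forall a : M, dim 1 (fun x => x ord0 = a) = Some 0;
  D1_line : dim 1 (fun _ => True) = Some 1;
  D1_empty : forall n X, SN n X -> (dim n X = None <-> forall x, ~ X x);
  D2 : forall n X Y, SN n X -> SN n Y ->
         dim n (fun x => X x \/ Y x) = dmax (dim n X) (dim n Y);
  D3 : forall m n (I : pset M m) (Z : pset M (m + n)),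
         SN m I -> SN (m + n) Z ->
         (* pairwise disjoint fibres X_t = {x | (t,x) in Z}, t in I *)
         (forall t t', I t -> I t' -> (exists x, Z (join t x) /\ Z (join t' x)) ->
            forall i, t i = t' i) ->
         (forall d, SN m (fun t => I t /\ dim n (fun x => Z (join t x)) = d)) /\
         (forall k, (forall t, I t -> dim n (fun x => Z (join t x)) = k) ->
            dim n (fun x => exists t, I t /\ Z (join t x)) = dadd (dim m I) k);
  D4 : forall n m (X : pset M n) (Y : pset M m) (f : pt M n -> pt M m),
         SN n X -> SN m Y -> SN (n + m) (graph_on X f) ->
         (forall x, X x -> Y (f x)) ->
         (forall x x', X x -> X x' -> (forall j, f x j = f x' j) -> forall i, x i = x' i) ->
         (forall y, Y y -> exists x, X x /\ forall j, f x j = y j) ->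
         dim n X = dim m Y;
  D5 : forall n X, SM n X -> is_omin_dim lt X (dim n X);
  D6 : forall n (f : pt M n -> M), SN (n + 1) (graph1 f) ->
         exists F : pt M n -> M, SM (n + 1) (graph1 F) /\
         exists E : pset M n, SN n E /\ dlt (dim n E) (Some n) /\
           forall x, ~ E x -> f x = F x
}.

Definition full M (lt : M -> M -> Prop) (SN : forall n, pset M n -> Prop)
    (dim : forall n, pset M n -> option nat) n (X : pset M n) : Prop :=
  SN n X /\ dlt (dim n (fun x => cl lt X x /\ ~ X x)) (dim n X).

(* Main.v *)
Require Import Defs.
From Stdlib Require Import PropExtensionality FunctionalExtensionality Classical ClassicalEpsilon.
From mathcomp Require Import all_boot zify.
Set Implicit Arguments. Unset Strict Implicit.

Lemma S_ext M (S : forall n, pset M n -> Prop) n (A B : pset M n) :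
  (forall x, A x <-> B x) -> S n A -> S n B.
Proof.
move=> h; have -> // : A = B.
by apply: functional_extensionality => x; apply: propositional_extensionality.
Qed.

Lemma S_and (M : Type) (lt : M -> M -> Prop) (S : forall n, pset M n -> Prop) (hS : structure lt S) n (A B : pset M n) :
  S n A -> S n B -> S n (fun x => A x /\ B x).
Proof.
move=> hA hB.
have := st_compl hS (st_union hS (st_compl hS hA) (st_compl hS hB)).
apply: S_ext => x; tauto.
Qed.

Lemma S_imp (M : Type) (lt : M -> M -> Prop) (S : forall n, pset M n -> Prop) (hS : structure lt S) n (A B : pset M n) :
  S n A -> S n B -> S n (fun x => A x -> B x).
Proof.
move=> hA hB.
have := st_union hS (st_compl hS hA) hB.
apply: S_ext => x; tauto.
Qed.

Lemma S_lt (M : Type) (lt : M -> M -> Prop) (S : forall n, pset M n -> Prop) (hS : structure lt S) N (p q : 'I_N) :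
  S N (fun w => lt (w p) (w q)).
Proof.
exact: (st_preim hS (fun j : 'I_2 => if val j == 0 then p else q) (st_lt hS)).
Qed.

Lemma S_forall_fin (M : Type) (lt : M -> M -> Prop) (S : forall n, pset M n -> Prop) (hS : structure lt S) n N (P : 'I_n -> pset M N) :
  (forall i, S N (P i)) -> S N (fun w => forall i, P i w).
Proof.
move=> hP.
have: forall s : seq 'I_n, S N (fun w => forall i, i \in s -> P i w).
  elim=> [|a s IH].
    by apply: S_ext (st_full hS N) => x; split.
  have := S_and hS (hP a) IH; apply: S_ext => x; split.
    by move=> [h1 h2] i; rewrite in_cons => /orP [/eqP -> //|]; apply: h2.
  move=> h; split; first by apply: h; rewrite in_cons eqxx.
  by move=> i hi; apply: h; rewrite in_cons hi orbT.
move=> /(_ (enum 'I_n)); apply: S_ext => x; split.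
  by move=> h i; apply: h; rewrite mem_enum.
by move=> h i _.
Qed.

Lemma ext_last_lt M n (w : pt M n) t (i : 'I_n.+1) (j : 'I_n) :
  i = j :> nat -> ext_last w t i = w j.
Proof.
rewrite /ext_last; case: unliftP => [j' -> | ->] /=.
  by rewrite /bump leqNgt ltn_ord /= add0n => h; congr w; apply: val_inj.
by move=> h; have := ltn_ord j; rewrite -h ltnn.
Qed.

Lemma ext_last_max M n (w : pt M n) t (i : 'I_n.+1) :
  i = n :> nat -> ext_last w t i = t.
Proof.
rewrite /ext_last; case: unliftP => [j' -> | -> //] /=.
by rewrite /bump leqNgt ltn_ord /= add0n => h; have := ltn_ord j'; rewrite h ltnn.
Qed.

Lemma join_lo M m n (t : pt M m) (x : pt M n) (i : 'I_(m+n)) (j : 'I_m) :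
  i = j :> nat -> join t x i = t j.
Proof.
rewrite /join; case: splitP => [j' e | j' e] h.
  by congr t; apply: val_inj; rewrite /= -e -h.
by have := ltn_ord j; rewrite -h e ltnNge leq_addr.
Qed.

Lemma join_hi M m n (t : pt M m) (x : pt M n) (i : 'I_(m+n)) (j : 'I_n) :
  i = m + j :> nat -> join t x i = x j.
Proof.
rewrite /join; case: splitP => [j' e | j' e] h.
  by have := ltn_ord j'; rewrite -e h ltnNge leq_addr.
by congr x; apply: val_inj; move: h; rewrite e => /eqP; rewrite eqn_add2l => /eqP.
Qed.

Lemma lft_join M m n (t : pt M m) (x : pt M n) : lft (join t x) = t.
Proof. by apply: functional_extensionality => i; rewrite /lft (join_lo _ _ (j := i)). Qed.

Lemma rgt_join M m n (t : pt M m) (x : pt M n) : rgt (join t x) = x.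
Proof. by apply: functional_extensionality => i; rewrite /rgt (join_hi _ _ (j := i)). Qed.

Lemma join_lr M m n (z : pt M (m + n)) : join (lft z) (rgt z) = z.
Proof.
apply: functional_extensionality => i; rewrite /join /lft /rgt.
by rewrite -[in RHS](splitK i); case: (split i).
Qed.

Lemma tr T (A : T -> Prop) a b : A a -> a = b -> A b.
Proof. by move=> h <-. Qed.

Lemma step_id M n k (x : pt M n) (y' : pt M k) t (i : 'I_(n + k.+1)) :
  ext_last (join x y') t (cast_ord (addnS n k) i) = join x (ext_last y' t) i.
Proof.
case: (ltnP i n) => h1.
  rewrite (join_lo _ _ (j := Ordinal h1)) //.
  rewrite (ext_last_lt _ _ (j := Ordinal (ltn_addr k h1))) //.
  by rewrite (join_lo _ _ (j := Ordinal h1)).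
case: (ltnP i (n + k)) => h2.
  have h3 : i - n < k by rewrite ltn_subLR.
  have e : (i : nat) = n + (i - n) by rewrite subnKC.
  rewrite (join_hi _ _ (j := Ordinal (leqW h3))) //.
  rewrite (ext_last_lt _ _ (j := Ordinal h3)) //.
  rewrite (ext_last_lt _ _ (j := Ordinal h2)) //.
  by rewrite (join_hi _ _ (j := Ordinal h3)).
have e : (i : nat) = n + k.
  by apply/eqP; rewrite eqn_leq h2 -ltnS -addnS ltn_ord.
rewrite (join_hi _ _ (j := ord_max)) //.
by rewrite !ext_last_max.
Qed.

Lemma S_exists_k (M : Type) (lt : M -> M -> Prop) (S : forall n, pset M n -> Prop)
  (hS : structure lt S) k n (A : pset M (n + k)) :
  S (n + k) A -> S n (fun x => exists y : pt M k, A (join x y)).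
Proof.
elim: k A => [|k IH] A hA.
  have := st_preim hS (fun i : 'I_(n + 0) => cast_ord (addn0 n) i) hA.
  apply: S_ext => x; split.
    move=> h; exists (fun i : 'I_0 => x (cast_ord (addn0 n) (rshift n i))).
    apply: (tr h); apply: functional_extensionality => i.
    rewrite /join; case: splitP => [j e| j]; last by case: j.
    by congr x; apply: val_inj; rewrite /= e.
  move=> [y hy]; apply: (tr hy); apply: functional_extensionality => i.
  rewrite /join; case: splitP => [j e| j]; last by case: j.
  by congr x; apply: val_inj; rewrite /= e.
have hB := st_preim hS (fun i : 'I_(n + k.+1) => cast_ord (addnS n k) i) hA.
have hC := st_proj hS hB.
have := IH _ hC.
apply: S_ext => x; split.
  move=> [y' [t ht]]; exists (ext_last y' t).
  apply: (tr ht); apply: functional_extensionality => i.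
  by rewrite step_id.
move=> [y hy]; exists (fun j => y (widen_ord (leqnSn k) j)); exists (y ord_max).
apply: (tr hy); apply: functional_extensionality => i.
rewrite step_id; congr join; apply: functional_extensionality => j.
rewrite /ext_last; case: unliftP => [j' -> | -> //].
by congr y; apply: val_inj; rewrite /= /bump leqNgt ltn_ord.
Qed.

Lemma S_forall_k (M : Type) (lt : M -> M -> Prop) (S : forall n, pset M n -> Prop)
  (hS : structure lt S) k n (A : pset M (n + k)) :
  S (n + k) A -> S n (fun x => forall y : pt M k, A (join x y)).
Proof.
move=> hA; have := st_compl hS (S_exists_k hS (st_compl hS hA)).
apply: S_ext => x; split.
  by move=> h y; apply: NNPP => hn; apply: h; exists y.
by move=> h [y hy]; apply: hy.
Qed.

Lemma S_box (M : Type) (lt : M -> M -> Prop) (S : forall n, pset M n -> Prop)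
  (hS : structure lt S) n N (fa fb fc : 'I_n -> 'I_N) :
  S N (fun w => box lt (fun i => w (fa i)) (fun i => w (fb i)) (fun i => w (fc i))).
Proof.
apply: (S_forall_fin hS (P := fun i w => lt (w (fa i)) (w (fc i)) /\ lt (w (fc i)) (w (fb i)))) => i.
exact: (S_and hS (S_lt hS _ _) (S_lt hS _ _)).
Qed.

Lemma S_cl (M : Type) (lt : M -> M -> Prop) (S : forall n, pset M n -> Prop)
  (hS : structure lt S) n (X : pset M n) :
  S n X -> S n (cl lt X).
Proof.
move=> hX.
pose P (w : pt M ((n + (n + n)) + n)) :=
  box lt (lft (rgt (lft w))) (rgt (rgt (lft w))) (rgt w) /\ X (rgt w).
have hP : S _ P.
  apply: (S_and hS).
    exact: (S_box hS (fun i => lshift n (rshift n (lshift n i)))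
                     (fun i => lshift n (rshift n (rshift n i))) (fun i => rshift _ i)).
  exact: (st_preim hS (fun j => rshift _ j) hX).
have hQ := S_exists_k hS hP.
pose R (z : pt M (n + (n + n))) :=
  box lt (lft (rgt z)) (rgt (rgt z)) (lft z) -> exists y, P (join z y).
have hR : S _ R.
  apply: (S_imp hS) hQ.
  exact: (S_box hS (fun i => rshift n (lshift n i)) (fun i => rshift n (rshift n i))
                   (fun i => lshift _ i)).
have := S_forall_k hS hR.
apply: S_ext => x; rewrite /R /P /cl; split.
  move=> h a b hb; have := h (join a b).
  rewrite ?(lft_join, rgt_join) => /(_ hb) [y]; rewrite ?(lft_join, rgt_join) => hy.
  by exists y.
move=> h ab; rewrite ?(lft_join, rgt_join) => hb.
have [y hy] := h _ _ hb; exists y.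
by rewrite ?(lft_join, rgt_join).
Qed.

Lemma box_meet (M : Type) (lt : M -> M -> Prop) (hd : dlo lt) n (a1 b1 a2 b2 x : pt M n) :
  box lt a1 b1 x -> box lt a2 b2 x -> exists a b, box lt a b x /\
    forall y, box lt a b y -> box lt a1 b1 y /\ box lt a2 b2 y.
Proof.
case: hd => irr trans tri _ _ h1 h2.
exists (fun i => if excluded_middle_informative (lt (a1 i) (a2 i)) then a2 i else a1 i).
exists (fun i => if excluded_middle_informative (lt (b1 i) (b2 i)) then b1 i else b2 i).
split.
  move=> i; have [h1a h1b] := h1 i; have [h2a h2b] := h2 i.
  by case: excluded_middle_informative; case: excluded_middle_informative.
move=> y hy; split=> i; have [ha hb] := hy i;
  move: ha hb; case: excluded_middle_informative => la;
  case: excluded_middle_informative => lb ha hb; split; try done;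
  try (by apply: trans ha); try (by apply: trans hb).
all: (simpl in ha, hb); case: (tri (a1 i) (a2 i)) => [?|[E1|?]]; case: (tri (b1 i) (b2 i)) => [?|[E2|?]];
  try rewrite E1 in ha la *; try rewrite E2 in hb lb *; solve [eauto | tauto].
Qed.


Lemma dopt e d1 d2 x1 x2 :
  dmax e (dmax d1 d2) = dmax d1 d2 -> dlt d1 x1 -> dlt d2 x2 -> dlt e (dmax x1 x2).
Proof.
case: e => [e|]; case: d1 => [d1|]; case: d2 => [d2|];
  case: x1 => [x1|]; case: x2 => [x2|] //= => [[]]*; lia.
Qed.

Lemma pset_eq M n (A B : pset M n) : (forall x, A x <-> B x) -> A = B.
Proof.
by move=> h; apply: functional_extensionality => x; apply: propositional_extensionality.
Qed.

Lemma full2 (M : Type) (lt : M -> M -> Prop) (SM SN : forall n, pset M n -> Prop)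
  (dim : forall n, pset M n -> option nat) (hS : structure lt SN)
  (hD : dim_compatible lt SM SN dim) n (X1 X2 : pset M n) :
  full lt SN dim X1 -> full lt SN dim X2 -> full lt SN dim (fun x => X1 x \/ X2 x).
Proof.
move=> [s1 f1] [s2 f2].
have sY := st_union hS s1 s2.
split => //.
rewrite (D2 hD s1 s2).
have sD := fun (X : pset M n) (s : SN n X) =>
  S_and hS (S_cl hS s) (st_compl hS s).
apply: dopt f1 f2.
have E1 := D2 hD (sD _ sY) (st_union hS (sD _ s1) (sD _ s2)).
have E2 := D2 hD (sD _ s1) (sD _ s2).
cbv beta in E1, E2 |- *.
rewrite -E2 -E1.
congr dim; apply: pset_eq => x; split; last by tauto.
move=> [[hc hn0]|] //.
have [n1 n2] : ~ X1 x /\ ~ X2 x by clear -hn0; tauto.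
case: (classic (cl lt X1 x)) => c1; first by left.
case: (classic (cl lt X2 x)) => c2; first by right.
exfalso.
have [a1 [b1 [hb1 hn1]]] : exists a b, box lt a b x /\ ~ exists y, box lt a b y /\ X1 y.
  by apply: NNPP => h; apply: c1 => a b hb; apply: NNPP => hn; apply: h; exists a, b.
have [a2 [b2 [hb2 hn2]]] : exists a b, box lt a b x /\ ~ exists y, box lt a b y /\ X2 y.
  by apply: NNPP => h; apply: c2 => a b hb; apply: NNPP => hn; apply: h; exists a, b.
have [a [b [hb hab]]] := box_meet (st_order hS) hb1 hb2.
have [y [hy [y1|y2]]] := hc a b hb.
  by apply: hn1; exists y; split => //; case: (hab y hy).
by apply: hn2; exists y; split => //; case: (hab y hy).
Qed.

Theorem lemma2p8 (M : Type) (lt : M -> M -> Prop)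
    (SM SN : forall n, pset M n -> Prop) (dim : forall n, pset M n -> option nat) :
  o_minimal lt SM -> expansion lt SM SN -> open_definable_L lt SM SN ->
  dim_compatible lt SM SN dim ->
  forall (n k : nat) (X : 'I_k -> pset M n), 0 < k ->
    (forall i, full lt SN dim (X i)) ->
    full lt SN dim (fun x => exists i, X i x).
Proof.
move=> _ [hS _] _ hD n k; elim: k => [|k IH] X // _ hX.
case: k IH X hX => [|k] IH X hX.
  have -> : (fun x => exists i : 'I_1, X i x) = X ord0.
    apply: pset_eq => x; split; last by exists ord0.
    by move=> [i]; rewrite (ord1 i).
  exact: hX.
have -> : (fun x => exists i : 'I_k.+2, X i x) =
    (fun x => X ord_max x \/ exists j : 'I_k.+1, X (widen_ord (leqnSn _) j) x).
  apply: pset_eq => x; split.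
    move=> [i hi]; case: (ltnP i k.+1) => h.
      by right; exists (Ordinal h); apply: (tr (A := fun j => X j x) hi); apply: val_inj.
    left; apply: (tr (A := fun j => X j x) hi); apply: val_inj => /=; apply/eqP.
    by rewrite eqn_leq h -ltnS ltn_ord.
  by move=> [h|[j h]]; [exists ord_max | exists (widen_ord (leqnSn _) j)].
apply: (full2 hS hD (hX _)).
exact: IH.
Qed.
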